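(* Let $c\ge0$, $\gamma\ge0$, $\sigma^2>0$ and $\alpha\in(0,1]$. Then the function $$f(x)=\frac{c+\gamma\sigma^{2\alpha}\left(2^{x}-1\right)^{\alpha}}{x}$$ is convex on $(0,\infty)$. In particular this holds with $c=P_0-P_{\mathrm{sleep}}$ whenever $P_0\ge P_{\mathrm{sleep}}$.
   Context: $P_0\ge0$ is the load-independent active power consumption and $P_{\mathrm{sleep}}$ a constant sleep power consumption. *)

(* Defs.v *)
From Stdlib Require Import Reals.
Open Scope R_scope.

Definition convex_on (D : R -> Prop) (f : R -> R) : Prop :=
  forall x y t, D x -> D y -> 0 <= t <= 1 ->
    f (t * x + (1 - t) * y) <= t * f x + (1 - t) * f y.

Definition pos_reals (x : R) : Prop := 0 < x.

(* f(x) = (c + gamma * (sigma^2)^alpha * (2^x - 1)^alpha) / x,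
   with sigma2 standing for sigma^2 > 0. *)
Definition energy_fun (c gamma sigma2 alpha : R) (x : R) : R :=
  (c + gamma * Rpower sigma2 alpha * Rpower (Rpower 2 x - 1) alpha) / x.

(* Main.v *)
Require Import Defs.
From Stdlib Require Import Reals Lra Psatz.
From Coquelicot Require Import Coquelicot.
Open Scope R_scope.

Lemma convex_crit (f f1 f2 : R -> R) :
  (forall x, 0 < x -> is_derive f x (f1 x)) ->
  (forall x, 0 < x -> is_derive f1 x (f2 x)) ->
  (forall x, 0 < x -> 0 <= f2 x) ->
  forall x y t, 0 < x -> 0 < y -> 0 <= t <= 1 ->
    f (t * x + (1 - t) * y) <= t * f x + (1 - t) * f y.
Proof.
  intros D1 D2 P.
  assert (Mono : forall x y, 0 < x -> x < y -> f1 x <= f1 y).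
  { intros x y Hx Hxy.
    destruct (MVT_cor2 f1 f2 x y Hxy) as [c [Hc1 Hc2]].
    - intros c Hc. apply is_derive_Reals, D2. lra.
    - assert (0 <= f2 c) by (apply P; lra). nra. }
  assert (Main : forall x y t, 0 < x -> x < y -> 0 < t < 1 ->
    f (t * x + (1 - t) * y) <= t * f x + (1 - t) * f y).
  { intros x y t Hx Hxy Ht.
    set (z := t * x + (1 - t) * y).
    assert (Hz1 : x < z) by (unfold z; nra).
    assert (Hz2 : z < y) by (unfold z; nra).
    destruct (MVT_cor2 f f1 x z Hz1) as [c1 [E1 Hc1]].
    { intros c Hc. apply is_derive_Reals, D1. lra. }
    destruct (MVT_cor2 f f1 z y Hz2) as [c2 [E2 Hc2]].
    { intros c Hc. apply is_derive_Reals, D1. lra. }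
    assert (M : f1 c1 <= f1 c2) by (apply Mono; lra).
    assert (Ezx : z - x = (1 - t) * (y - x)) by (unfold z; ring).
    assert (Eyz : y - z = t * (y - x)) by (unfold z; ring).
    rewrite Ezx in E1. rewrite Eyz in E2.
    assert (0 <= t * (1 - t) * (y - x) * (f1 c2 - f1 c1)).
    { apply Rmult_le_pos; [|lra]. apply Rmult_le_pos; [|lra]. nra. }
    nra. }
  intros x y t Hx Hy Ht.
  destruct (Req_dec t 0) as [->|Ht0].
  { replace (0 * x + (1 - 0) * y) with y by ring. lra. }
  destruct (Req_dec t 1) as [->|Ht1].
  { replace (1 * x + (1 - 1) * y) with x by ring. lra. }
  destruct (Rtotal_order x y) as [Hxy|[<-|Hxy]].
  - apply Main; lra.
  - replace (t * x + (1 - t) * x) with x by ring. lra.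
  - replace (t * x + (1 - t) * y) with ((1 - t) * y + (1 - (1 - t)) * x) by ring.
    replace (t * f x + (1 - t) * f y) with ((1 - t) * f y + (1 - (1 - t)) * f x) by ring.
    apply Main; lra.
Qed.

Lemma key_ineq (u : R) : 0 <= u -> u * u * exp u <= (exp u - 1) * (exp u - 1).
Proof.
  intros Hu.
  set (m := fun s => exp (2 * s) - 1 - 2 * s * exp s).
  set (m1 := fun s => 2 * exp s * (exp s - 1 - s)).
  assert (Hd : forall s, is_derive m s (m1 s)).
  { intros s. unfold m, m1. auto_derive. 
    - auto.
    - replace (2 * s) with (s + s) by ring. rewrite exp_plus. ring. }
  assert (Hm : 0 <= m (u / 2)).
  { destruct (Req_dec u 0) as [->|Hu0].
    - unfold m. replace (2 * (0/2)) with 0 by field. rewrite exp_0. lra.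
    - destruct (MVT_cor2 m m1 0 (u/2)) as [c [E Hc]].
      + lra.
      + intros c _. apply is_derive_Reals, Hd.
      + assert (m 0 = 0) by (unfold m; rewrite Rmult_0_r, exp_0; ring).
        assert (0 <= m1 c).
        { unfold m1. pose proof (exp_pos c). pose proof (exp_ineq1_le c). nra. }
        nra. }
  unfold m in Hm. replace (2 * (u/2)) with u in Hm by field.
  assert (Eu : exp u = exp (u/2) * exp (u/2)) by (rewrite <- exp_plus; f_equal; field).
  pose proof (exp_pos (u/2)).
  assert (0 <= u * exp (u/2)) by nra.
  assert (H2 : u * exp (u/2) <= exp u - 1) by nra.
  rewrite Eu at 1.
  replace (u * u * (exp (u / 2) * exp (u / 2))) with ((u * exp (u/2)) * (u * exp (u/2))) by ring.
  apply Rmult_le_compat; lra.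
Qed.

Section Main.
Variables (c K a : R).
Hypotheses (Hc : 0 <= c) (HK : 0 <= K) (Ha : 0 < a <= 1).
Let L := ln 2.
Let p x := exp (x * L).
Let w x := exp (x * L) - 1.
Let G x := exp (a * ln (exp (x * L) - 1)).
Let G1 x := a * L * p x * G x / w x.
Let G2 x := a * L * L * p x * G x * (a * p x - 1) / (w x * w x).
Let f x := (c + K * exp (a * ln (exp (x * L) - 1))) / x.
Let f1 x := (K * G1 x * x - (c + K * G x)) / (x * x).
Let f2 x := (K * G2 x * (x * x) - 2 * x * K * G1 x + 2 * (c + K * G x)) / (x * x * x).

Lemma L_pos : 0 < L.
Proof. unfold L. rewrite <- ln_1. apply ln_increasing; lra. Qed.

Lemma w_pos x : 0 < x -> 0 < w x.
Proof.
  intros Hx. unfold w. pose proof L_pos.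
  pose proof (exp_ineq1_le (x * L)). nra.
Qed.

Lemma d1 x : 0 < x -> is_derive f x (f1 x).
Proof.
  intros Hx. pose proof (w_pos x Hx) as Hw. unfold w in Hw.
  unfold f, f1, G1, G, p, w. auto_derive.
  - repeat split; try lra.
  - replace (exp (x * L) + - (1)) with (exp (x * L) - 1) by ring.
    set (E := exp (x * L)) in *. set (g := exp (a * ln (E - 1))).
    field. split; lra.
Qed.

Lemma d2 x : 0 < x -> is_derive f1 x (f2 x).
Proof.
  intros Hx. pose proof (w_pos x Hx) as Hw. unfold w in Hw.
  unfold f1, f2, G2, G1, G, p, w. auto_derive.
  - repeat split; try lra; try nra.
  - replace (exp (x * L) + - (1)) with (exp (x * L) - 1) by ring.
    set (E := exp (x * L)) in *. set (g := exp (a * ln (E - 1))).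
    field. split; lra.
Qed.

Lemma f2_nonneg x : 0 < x -> 0 <= f2 x.
Proof.
  intros Hx. pose proof (w_pos x Hx) as Hw. pose proof L_pos as HL.
  set (u := x * L).
  assert (Hu : 0 <= u) by (unfold u; nra).
  pose proof (key_ineq u Hu) as Kq.
  assert (Hp : p x = exp u) by reflexivity.
  assert (Hw' : w x = exp u - 1) by reflexivity.
  assert (HG : 0 < G x) by apply exp_pos.
  set (Q := a * a * exp u * exp u * u * u - a * exp u * u * u - 2 * a * exp u * u * (exp u - 1)
           + 2 * (exp u - 1) * (exp u - 1)).
  assert (HQ : 0 <= Q).
  { assert (H : Q = (exp u - 1 - a * exp u * u) * (exp u - 1 - a * exp u * u)
               + ((exp u - 1) * (exp u - 1) - u * u * exp u) + (1 - a) * (exp u * (u * u))) by (unfold Q; ring).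
    pose proof (exp_pos u).
    assert (0 <= (1 - a) * (exp u * (u * u))).
    { apply Rmult_le_pos; [lra|]. apply Rmult_le_pos; nra. }
    rewrite H. pose proof (Rle_0_sqr (exp u - 1 - a * exp u * u)). unfold Rsqr in *. lra. }
  assert (E : f2 x = (2 * c + K * (G x / (w x * w x)) * Q) / (x * x * x)).
  { unfold f2, G2, G1, Q. rewrite Hw', Hp. unfold u. unfold w in Hw. set (E := exp (x * L)) in *. set (g := G x). field. split; lra. }
  assert (X3 : 0 < x * x * x) by (repeat apply Rmult_lt_0_compat; lra).
  assert (W2 : 0 < w x * w x) by (apply Rmult_lt_0_compat; lra).
  rewrite E. apply Rmult_le_pos.
  - apply Rplus_le_le_0_compat; [lra|]. apply Rmult_le_pos; [|lra]. apply Rmult_le_pos; [lra|].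
    apply Rmult_le_pos; [lra|]. apply Rlt_le, Rinv_0_lt_compat. lra.
  - apply Rlt_le, Rinv_0_lt_compat. lra.
Qed.

Lemma convex_main x y t : 0 < x -> 0 < y -> 0 <= t <= 1 ->
    f (t * x + (1 - t) * y) <= t * f x + (1 - t) * f y.
Proof. apply (convex_crit f f1 f2); [apply d1|apply d2|apply f2_nonneg]. Qed.
End Main.

Theorem lemma4 :
  (forall c gamma sigma2 alpha : R,
     0 <= c -> 0 <= gamma -> 0 < sigma2 -> 0 < alpha <= 1 ->
     convex_on pos_reals (energy_fun c gamma sigma2 alpha))
  /\
  (forall P0 Psleep gamma sigma2 alpha : R,
     0 <= P0 -> P0 >= Psleep ->
     0 <= gamma -> 0 < sigma2 -> 0 < alpha <= 1 ->
     convex_on pos_reals (energy_fun (P0 - Psleep) gamma sigma2 alpha)).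
Proof.
  assert (A : forall c gamma sigma2 alpha : R,
     0 <= c -> 0 <= gamma -> 0 < sigma2 -> 0 < alpha <= 1 ->
     convex_on pos_reals (energy_fun c gamma sigma2 alpha)).
  { intros c gamma sigma2 alpha Hc Hg Hs Ha x y t Hx Hy Ht.
    assert (HK : 0 <= gamma * Rpower sigma2 alpha).
    { apply Rmult_le_pos; [lra|]. unfold Rpower. apply Rlt_le, exp_pos. }
    exact (convex_main c (gamma * Rpower sigma2 alpha) alpha Hc HK Ha x y t Hx Hy Ht). }
  split; [exact A|].
  intros P0 Psleep gamma sigma2 alpha H0 H1 Hg Hs Ha. apply A; auto. lra.
Qed.
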